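(* A policy profile $\pi^*\in\Pi$ is a Nash policy if and only if $\langle v(\pi^* ),\pi-\pi^*\rangle\le0$ for all $\pi\in\Pi$.
   Context: Standing setting. Finite $N$-player stochastic game with random stopping: players $\mathcal N$, finite states $\mathcal S$, finite action sets $\mathcal A_i$, $\mathcal A=\prod_i\mathcal A_i$, rewards $r_i:\mathcal S\times\mathcal A\to[-1,1]$, nonnegative transition weights $P(s'\mid s,a)$ with stopping probability $\zeta_{s,a}=1-\sum_{s'}P(s'\mid s,a)\ge\zeta>0$, initial distribution $\rho$. Policies $\pi_i\in\Pi_i=\Delta(\mathcal A_i)^{\mathcal S}$, $\Pi=\prod_i\Pi_i$. Episodes: $s_0\sim\rho$; players independently draw $a_{i,t}\sim\pi_i(\cdot\mid s_t)$; stop w.p. $\zeta_{s_t,a_t}$ (time $T(\tau)$), else move to $s'$ w.p. $P(s'\mid s_t,a_t)$. $V_{i,\rho}(\pi)=\mathbb E_\pi[\sum_{t=0}^{T(\tau)}r_i(s_t,a_t)]$, $v_i(\pi)=\nabla_{\pi_i}V_{i,\rho}(\pi)$, $v=(v_i)_i$. A Nash policy satisfies $V_{i,\rho}(\pi^* )\ge V_{i,\rho}(\pi_i;\pi^*_{-i})$ for all $i$ and $\pi_i\in\Pi_i$. Standing assumption: the mismatch coefficient $M=\max_{\pi,\pi'}\|\tilde d^\pi_\rho/\tilde d^{\pi'}_\rho\|_\infty$ is finite, where $\tilde d^\pi_\rho(s)=\mathbb E_\pi[\sum_{t=0}^{T(\tau)}\mathbf 1\{s_t=s\}]$. *)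

(* Defs.v *)
From HB Require Import structures.
From mathcomp Require Import all_boot all_order all_algebra.
From mathcomp Require Import all_classical all_reals all_analysis.
Set Implicit Arguments. Unset Strict Implicit. Unset Printing Implicit Defensive.
Import Order.TTheory GRing.Theory Num.Theory numFieldNormedType.Exports.
Local Open Scope ring_scope.

Section Game.
Variables (R : realType) (N S : finType) (A : N -> finType).

Definition jact := {dffun forall i : N, A i}.

(* (not necessarily stochastic) policy arrays: pi i s a_i = pi_i(a_i | s) *)
Definition polarr := forall i : N, S -> A i -> R.

Definition is_policy_i (i : N) (x : S -> A i -> R) : Prop :=
  forall s, (forall a, 0 <= x s a) /\ \sum_(a : A i) x s a = 1.

Definition is_policy (pi : polarr) : Prop := forall i, is_policy_i (pi i).

Definition jprob (pi : polarr) (s : S) (a : jact) : R := \prod_(i : N) pi i s (a i).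

Variables (P : S -> jact -> S -> R) (rho : S -> R).
(* P s a s' = P(s' | s, a); the stopping probability is 1 - sum_s' P s a s' *)

(* occ pi t s = Pr_pi(T(tau) >= t and s_t = s) : the episode is still running at
   time t and is in state s *)
Fixpoint occ (pi : polarr) (t : nat) : S -> R :=
  match t with
  | 0 => rho
  | t'.+1 => fun s' => \sum_(s : S) \sum_(a : jact) occ pi t' s * jprob pi s a * P s a s'
  end.

Definition value (rr : S -> jact -> R) (pi : polarr) : R :=
  limn (series (fun t => \sum_(s : S) \sum_(a : jact) occ pi t s * jprob pi s a * rr s a)).

Definition visit (pi : polarr) (s : S) : R := limn (series (fun t => occ pi t s)).

Definition upd (pi : polarr) (i : N) (x : S -> A i -> R) : polarr :=
  @dfwith N (fun j => S -> A j -> R) pi i x.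

(* v_i(pi) = grad_{pi_i} V_{i,rho}(pi): partial derivative w.r.t. the coordinate
   pi_i(b | s) (direct parameterization, V extended to arbitrary real arrays) *)
Definition grad (r : N -> S -> jact -> R) (pi : polarr) (i : N) (s : S) (b : A i) : R :=
  derive1 (fun h : R => value (r i)
    (upd pi (fun s' a' => pi i s' a' + (if (s' == s) && (a' == b) then h else 0)))) 0.

Definition grad_inner (r : N -> S -> jact -> R) (pi0 pi : polarr) : R :=
  \sum_(i : N) \sum_(s : S) \sum_(b : A i) grad r pi0 s b * (pi i s b - pi0 i s b).

Definition is_nash (r : N -> S -> jact -> R) (pis : polarr) : Prop :=
  forall i (x : S -> A i -> R), is_policy_i x ->
    value (r i) (upd pis x) <= value (r i) pis.

End Game.

(* Main.v *)
Require Import Defs.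
From HB Require Import structures.
From mathcomp Require Import all_boot all_order all_algebra.
From mathcomp Require Import all_classical all_reals all_analysis.
From mathcomp Require Import ring lra.
Import Order.TTheory GRing.Theory Num.Theory.
Local Open Scope ring_scope.

Module Helpers.
Set Implicit Arguments. Unset Strict Implicit. Unset Printing Implicit Defensive.
Import numFieldNormedType.Exports.
Local Open Scope classical_set_scope.
Section Ser.
Variable R : realType.

Lemma conv_geo (u : nat -> R) (C q : R) : 0 <= q < 1 ->
  (forall t, `|u t| <= C * q ^+ t) -> cvgn (series u).
Proof.
move=> /andP[q0 q1] hu; apply: normed_cvg.
apply: (@series_le_cvg R _ (geometric C q)) => //.
- by move=> n; exact: normr_ge0.
- by move=> n /=; apply: le_trans (normr_ge0 (u n)) (hu n).
- by apply: is_cvg_geometric_series; rewrite ger0_norm.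
Qed.

Lemma cvg_sum_seq (J : Type) (s : seq J) (g : J -> nat -> R) (l : J -> R) :
  (forall j, g j @ \oo --> l j) ->
  (fun n => \sum_(j <- s) g j n) @ \oo --> \sum_(j <- s) l j.
Proof.
move=> hg; elim: s => [|j s IH].
  under eq_fun do rewrite big_nil; rewrite big_nil; exact: cvg_cst.
under eq_fun do rewrite big_cons; rewrite big_cons; exact: cvgD.
Qed.

Lemma ser_sum (J : finType) (c : J -> R) (g : J -> nat -> R) (L : J -> R) :
  (forall j, series (g j) @ \oo --> L j) ->
  series (fun t => \sum_j c j * g j t) @ \oo --> \sum_j c j * L j.
Proof.
move=> hg.
have -> : series (fun t => \sum_j c j * g j t) = (fun n => \sum_j c j * series (g j) n).
  apply: funext => n; rewrite /series /= exchange_big /=.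
  by apply: eq_bigr => j _; rewrite big_distrr.
apply: cvg_sum_seq => j; exact: cvgMl_tmp.
Qed.

Section Kern.
Variables (S : finType) (K : S -> S -> R) (q : R).
Hypothesis hq : 0 <= q < 1.
Hypothesis hK : forall s, \sum_s' `|K s s'| <= q.

Fixpoint useq (mu : S -> R) (t : nat) : S -> R :=
  match t with
  | 0 => mu
  | t'.+1 => fun s' => \sum_s useq mu t' s * K s s'
  end.

Definition dd mu s := limn (series (fun t => useq mu t s)).

Lemma useq_bound mu t : \sum_s `|useq mu t s| <= q ^+ t * \sum_s `|mu s|.
Proof.
elim: t => [|t IH] /=; first by rewrite expr0 mul1r.
apply: (le_trans (y := \sum_s' \sum_s `|useq mu t s| * `|K s s'|)).
  by apply: ler_sum => s' _; apply: (le_trans (ler_norm_sum _ _ _)); apply: ler_sum => s _; rewrite normrM.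
rewrite exchange_big /=.
apply: (le_trans (y := \sum_s `|useq mu t s| * q)).
  apply: ler_sum => s _; rewrite -big_distrr /=; apply: ler_wpM2l => //; exact: hK.
rewrite -big_distrl /= exprSr -mulrA [q * _]mulrC mulrA.
move/andP: hq => [q0 _]; by apply: ler_wpM2r.
Qed.

Lemma useq_cvg mu s : series (fun t => useq mu t s) @ \oo --> dd mu s.
Proof.
apply/cvg_ex; exists (dd mu s); apply: cvgP.
apply: (@conv_geo _ (\sum_s `|mu s|) q hq) => t.
rewrite mulrC; apply: le_trans (useq_bound mu t).
by rewrite (bigD1 s) //= lerDl sumr_ge0.
Qed.


Lemma dd_lim mu s : dd mu s = limn (series (fun t => useq mu t s)).
Proof. by []. Qed.

Lemma ser_shift (u : nat -> R) (L : R) :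
  series (fun t => u t.+1) @ \oo --> L -> series u @ \oo --> u 0%N + L.
Proof.
move=> h; rewrite -cvg_shiftS.
have -> : [sequence series u n.+1]_n = (fun n => u 0%N + series (fun t => u t.+1) n).
  by apply: funext => n; rewrite /series /= big_nat_recl.
by apply: cvgD => //; exact: cvg_cst.
Qed.

Lemma useq_sum_cvg mu (f : S -> R) :
  series (fun t => \sum_s useq mu t s * f s) @ \oo --> \sum_s dd mu s * f s.
Proof.
under eq_fun do under eq_bigr do rewrite mulrC.
have -> : \sum_s dd mu s * f s = \sum_s f s * dd mu s by apply: eq_bigr => s _; rewrite mulrC.
apply: ser_sum => s; exact: useq_cvg.
Qed.

Lemma dd_fix mu s' : dd mu s' = mu s' + \sum_s dd mu s * K s s'.
Proof.
have h := @ser_shift (fun t => useq mu t s') _ (@useq_sum_cvg mu (K^~ s')).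
exact: (cvg_unique _ (@useq_cvg mu s') h).
Qed.

Lemma useq_lin (J : finType) (a : J -> R) (nu : J -> S -> R) mu :
  (forall s', mu s' = \sum_j a j * nu j s') ->
  forall t s', useq mu t s' = \sum_j a j * useq (nu j) t s'.
Proof.
move=> hmu; elim=> [|t IH] s' /=; first exact: hmu.
under eq_bigr do rewrite IH big_distrl /=.
rewrite exchange_big /=; apply: eq_bigr => j _.
by rewrite big_distrr /=; apply: eq_bigr => s _; rewrite mulrA.
Qed.

Lemma useq_shift mu t s' :
  useq mu t.+1 s' = useq (fun s2 => \sum_s mu s * K s s2) t s'.
Proof.
elim: t s' => [|t IH] s'; first by [].
transitivity (\sum_s useq mu t.+1 s * K s s'); first by [].
transitivity (\sum_s useq (fun s2 => \sum_s0 mu s0 * K s0 s2) t s * K s s'); last by [].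
by apply: eq_bigr => s _; rewrite IH.
Qed.

Definition dlt (s : S) : S -> R := fun s' => (s' == s)%:R.

Definition wv (f : S -> R) (s : S) := \sum_s' dd (dlt s) s' * f s'.

Lemma dd_first s s' : dd (dlt s) s' = dlt s s' + \sum_s1 K s s1 * dd (dlt s1) s'.
Proof.
have h : series (fun t => useq (dlt s) t.+1 s') @ \oo --> \sum_s1 K s s1 * dd (dlt s1) s'.
  under eq_fun do rewrite useq_shift.
  rewrite (_ : (fun t => _) = (fun t => \sum_s1 K s s1 * useq (dlt s1) t s')); last first.
    apply: funext => t; apply: useq_lin => s2.
    rewrite (bigD1 s) //= /dlt eqxx mul1r big1 ?addr0; last first.
      by move=> s3 /negbTE ->; rewrite mul0r.
    rewrite (bigD1 s2) //= eqxx mulr1 big1 ?addr0 //.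
    by move=> s3 /negbTE; rewrite eq_sym => ->; rewrite mulr0.
  apply: ser_sum => s1; exact: useq_cvg.
exact: (cvg_unique _ (@useq_cvg (dlt s) s') (@ser_shift (fun t => useq (dlt s) t s') _ h)).
Qed.

Lemma wv_fix f s : wv f s = f s + \sum_s1 K s s1 * wv f s1.
Proof.
rewrite /wv; under eq_bigr do rewrite dd_first mulrDl.
rewrite big_split /=; congr (_ + _).
  rewrite (bigD1 s) //= /dlt eqxx mul1r big1 ?addr0 //.
  by move=> s3 /negbTE ->; rewrite mul0r.
under eq_bigr do rewrite big_distrl /=.
rewrite exchange_big /=; apply: eq_bigr => s1 _.
by rewrite big_distrr /=; apply: eq_bigr => s2 _; rewrite mulrA.
Qed.

End Kern.

Lemma pdl (S : finType) (rho d' w c c' : S -> R) (K K' : S -> S -> R) :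
  (forall s', d' s' = rho s' + \sum_s d' s * K' s s') ->
  (forall s, w s = c s + \sum_s' K s s' * w s') ->
  \sum_s d' s * c' s - \sum_s rho s * w s =
  \sum_s d' s * (c' s - c s + \sum_s' (K' s s' - K s s') * w s').
Proof.
move=> hd hw.
have e1 : \sum_s d' s * (c' s - c s + \sum_s' (K' s s' - K s s') * w s') =
   \sum_s d' s * c' s - \sum_s d' s * w s + \sum_s d' s * \sum_s' K' s s' * w s'.
  rewrite -sumrB -big_split /=; apply: eq_bigr => s _; rewrite (hw s).
  under eq_bigr do rewrite mulrBl; rewrite sumrB; ring.
have e2 : \sum_s d' s * \sum_s' K' s s' * w s' = \sum_s' (d' s' - rho s') * w s'.
  under eq_bigr do rewrite big_distrr /=.
  rewrite exchange_big /=; apply: eq_bigr => s' _.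
  rewrite [d' s' in X in X * _](hd s') addrAC subrr add0r big_distrl /=; apply: eq_bigr => s _; by rewrite mulrA.
rewrite e1 e2; under [X in _ = _ + X]eq_bigr do rewrite mulrBl; rewrite sumrB; ring.
Qed.


Lemma deriv_near (f g : R -> R) (delta : R) : 0 < delta ->
  (forall h, h != 0 -> `|h| < delta -> f h - f 0 = h * g h) ->
  g @ 0 --> g 0 -> derive1 f 0 = g 0.
Proof.
move=> d0 hf hg; rewrite /derive1; apply: cvg_lim => //.
have e : {near (0:R)^', g =1 (fun h => h^-1 *: (f (h + 0) - f 0))}.
  near=> h.
  have hn : h != 0 by near: h; exact: nbhs_dnbhs_neq.
  have hs : `|h| < delta by near: h; exact: dnbhs0_lt.
  by rewrite addr0 (hf h hn hs) /= scalerA mulVf // scale1r.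
apply: cvg_trans (near_eq_cvg e) _.
exact: cvg_trans (cvg_app g (@nbhs_dnbhs _ (0:R))) hg.
Unshelve. all: by end_near.
Qed.

End Ser.

Lemma prod_sum_dffun (R : comNzRingType) (I : finType) (T_ : I -> finType) (F : forall i, T_ i -> R) :
 \prod_i \sum_(b : T_ i) F i b = \sum_(a : {dffun forall i, T_ i}) \prod_i F i (a i).
Proof.
rewrite (reindex (@dffun_of_fprod I T_)) /=; last exact/onW_bij/dffun_of_fprod_bij.
transitivity (\sum_(t : fprod T_) \prod_(i in I) [ffun b => F i b] (t i)); last first.
  by apply: eq_bigr => t _; apply: eq_bigr => i _; rewrite /dffun_of_fprod !ffunE.
rewrite big_fprod.
transitivity (\prod_i \sum_(j in tagged_with T_ i) untag 0 [ffun b => F i b] j).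
  apply: eq_bigr => i _; rewrite -(big_tag (fun i => [ffun b => F i b])); apply: eq_bigr => b _; rewrite ffunE.
  done.
have H := @bigA_distr_big_dep R 0 1 *%R +%R I _ (fun i j => j \in tagged_with T_ i) (fun i j => untag 0 [ffun b => F i b] j).
rewrite H. apply: eq_bigl => g /=.
by apply/familyP/familyP => h j; have := h j.
Qed.

Section G.
Variables (R : realType) (N S : finType) (A : N -> finType).
Variables (P : S -> jact A -> S -> R) (rho : S -> R).
Implicit Types (pi : @polarr R N S A).

Definition Kp (pi : @polarr R N S A) s s' := \sum_(a : jact A) jprob pi s a * P s a s'.
Definition cp (rr : S -> jact A -> R) (pi : @polarr R N S A) s := \sum_(a : jact A) jprob pi s a * rr s a.

Lemma occ_useq pi t s : occ P rho pi t s = useq (Kp pi) rho t s.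
Proof.
elim: t s => [|t IH] s' //=.
apply: eq_bigr => s _; rewrite IH /Kp big_distrr /=; apply: eq_bigr => a _; by rewrite mulrA.
Qed.

Lemma visit_eq pi s : visit P rho pi s = dd (Kp pi) rho s.
Proof.
rewrite /visit /dd.
have -> : (fun t => occ P rho pi t s) = (fun t => useq (Kp pi) rho t s) by apply: funext => t; exact: occ_useq.
by [].
Qed.

Lemma value_eq rr pi q : 0 <= q < 1 -> (forall s, \sum_s' `|Kp pi s s'| <= q) ->
  value P rho rr pi = \sum_s dd (Kp pi) rho s * cp rr pi s.
Proof.
move=> hq hK; rewrite /value.
have -> : (fun t => \sum_s \sum_a occ P rho pi t s * jprob pi s a * rr s a) =
          (fun t => \sum_s useq (Kp pi) rho t s * cp rr pi s).
  apply: funext => t; apply: eq_bigr => s _; rewrite occ_useq /cp big_distrr /=.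
  by apply: eq_bigr => a _; rewrite mulrA.
apply: cvg_lim => //; exact: (useq_sum_cvg hq hK).
Qed.

Lemma jprob_ge0 pi s a : is_policy pi -> 0 <= jprob pi s a.
Proof. by move=> hp; apply: prodr_ge0 => i _; case: (hp i s) => h _; exact: h. Qed.

Lemma sum_jprob pi s : is_policy pi -> \sum_a jprob pi s a = 1.
Proof.
move=> hp; rewrite /jprob -(prod_sum_dffun (fun i b => pi i s b)).
by apply: big1 => i _; case: (hp i s).
Qed.

Definition rest (pi : @polarr R N S A) (i : N) s (a : jact A) := \prod_(j | j != i) pi j s (a j).

Lemma jprob_split pi i s a : jprob pi s a = pi i s (a i) * rest pi i s a.
Proof. by rewrite /jprob (bigD1 i). Qed.

Lemma jprob_upd pi i (x : S -> A i -> R) s a : jprob (upd pi x) s a = x s (a i) * rest pi i s a.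
Proof.
have e1 : @upd R N S A pi i x i = x.
  exact: dfwith_in.
have e2 : forall j, j != i -> @upd R N S A pi i x j = pi j by move=> j hj; rewrite /upd; apply: dfwith_out; rewrite eq_sym.
rewrite /jprob (bigD1 i) //= e1; congr (_ * _).
by apply: eq_bigr => j hj; rewrite e2.
Qed.

Lemma bform (i : N) (F : A i -> R) (G : jact A -> R) :
  \sum_(a : jact A) F (a i) * G a = \sum_b F b * \sum_(a : jact A | a i == b) G a.
Proof.
rewrite (partition_big (fun a : jact A => a i) predT) //=.
apply: eq_bigr => b _; rewrite big_distrr; apply: eq_bigr => a /eqP <-. done.
Qed.


Section Main.
Variables (zeta : R) (r : N -> S -> jact A -> R).
Hypotheses (hz : 0 < zeta) (hP : forall s a s', 0 <= P s a s')
  (hPz : forall s a, zeta <= 1 - \sum_s' P s a s').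

Definition q0 := Num.max 0 (1 - zeta).

Lemma q0P : 0 <= q0 < 1.
Proof. by rewrite /q0 le_max lexx /= gt_max ltr01 /= ltrBlDr ltrDl. Qed.

Lemma Kp_ge0 pi s s' : is_policy pi -> 0 <= Kp pi s s'.
Proof. by move=> hp; apply: sumr_ge0 => a _; apply: mulr_ge0 => //; exact: jprob_ge0. Qed.

Lemma Kp_pol' pi : is_policy pi -> forall s, \sum_s' `|Kp pi s s'| <= 1 - zeta.
Proof.
move=> hp s.
under eq_bigr do rewrite ger0_norm ?Kp_ge0 //.
rewrite /Kp exchange_big /=.
apply: (le_trans (y := \sum_a jprob pi s a * (1 - zeta))).
  apply: ler_sum => a _; rewrite -big_distrr /=; apply: ler_wpM2l; first exact: jprob_ge0.
  have := hPz s a; lra.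
by rewrite -big_distrl /= sum_jprob // mul1r.
Qed.

Lemma Kp_pol pi : is_policy pi -> forall s, \sum_s' `|Kp pi s s'| <= q0.
Proof. move=> hp s; apply: le_trans (Kp_pol' hp s) _; rewrite /q0 le_max lexx orbT //. Qed.

Variables (pis : @polarr R N S A) (i : N).
Arguments pis : clear implicits.
Hypothesis hpis : is_policy pis.

Definition K0 := Kp pis.
Definition c0 := cp (r i) pis.
Definition w0 := wv K0 c0.
Definition H s a := r i s a + \sum_s' P s a s' * w0 s'.
Definition Q s (b : A i) := \sum_(a : jact A | a i == b) rest pis i s a * H s a.

Lemma w0_fix s : w0 s = c0 s + \sum_s' K0 s s' * w0 s'.
Proof. exact: (wv_fix q0P (Kp_pol hpis)). Qed.

Lemma V0 : value P rho (r i) pis = \sum_s rho s * w0 s.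
Proof.
rewrite (value_eq (r i) q0P (Kp_pol hpis)).
apply/eqP; rewrite -subr_eq0; apply/eqP.
rewrite (pdl _ (dd_fix q0P (Kp_pol hpis) rho) w0_fix).
by apply: big1 => s _; rewrite subrr add0r big1 ?mulr0 // => s' _; rewrite subrr mul0r.
Qed.

Lemma inner_K (x : S -> A i -> R) s (w : S -> R) :
  \sum_s' (Kp (upd pis x) s s' - K0 s s') * w s' =
  \sum_b (x s b - pis i s b) * \sum_(a : jact A | a i == b) rest pis i s a * \sum_s' P s a s' * w s'.
Proof.
rewrite -(bform (fun b => x s b - pis i s b)).
have hk : forall s', Kp (upd pis x) s s' - K0 s s' =
    \sum_(a : jact A) (x s (a i) - pis i s (a i)) * (rest pis i s a * P s a s').
  move=> s'; rewrite /K0 /Kp -sumrB; apply: eq_bigr => a _.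
  rewrite jprob_upd (jprob_split pis i); ring.
under eq_bigr do rewrite hk big_distrl /=.
rewrite exchange_big /=; apply: eq_bigr => a _.
rewrite big_distrr big_distrr /=; apply: eq_bigr => s' _; ring.
Qed.

Lemma inner_c (x : S -> A i -> R) s :
  cp (r i) (upd pis x) s - c0 s =
  \sum_b (x s b - pis i s b) * \sum_(a : jact A | a i == b) rest pis i s a * r i s a.
Proof.
rewrite -(bform (fun b => x s b - pis i s b)).
rewrite /c0 /cp -sumrB; apply: eq_bigr => a _.
rewrite jprob_upd (jprob_split pis i); ring.
Qed.

Lemma pdl_game (x : S -> A i -> R) q : 0 <= q < 1 ->
  (forall s, \sum_s' `|Kp (upd pis x) s s'| <= q) ->
  value P rho (r i) (upd pis x) - value P rho (r i) pis =
  \sum_s dd (Kp (upd pis x)) rho s * \sum_b (x s b - pis i s b) * Q s b.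
Proof.
move=> hq hK.
rewrite (value_eq (r i) hq hK) V0 (pdl _ (dd_fix hq hK rho) w0_fix).
apply: eq_bigr => s _; congr (_ * _).
rewrite inner_c inner_K -big_split /=; apply: eq_bigr => b _.
rewrite -mulrDr -big_split /=; congr (_ * _); apply: eq_bigr => a _.
by rewrite /H mulrDr.
Qed.


Lemma Kp_diff (x : S -> A i -> R) s s' : Kp (upd pis x) s s' =
    K0 s s' + \sum_(a : jact A) (x s (a i) - pis i s (a i)) * (rest pis i s a * P s a s').
Proof.
rewrite /K0 /Kp -big_split /=; apply: eq_bigr => a _.
rewrite jprob_upd (jprob_split pis i); ring.
Qed.

Definition Bc := \sum_s \sum_s' \sum_(a : jact A) `|rest pis i s a * P s a s'|.
Definition q1 := Num.max 0 (1 - zeta / 2).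

Lemma q1P : 0 <= q1 < 1.
Proof.
rewrite /q1 le_max lexx /= gt_max ltr01 /= ltrBlDr ltrDl.
by rewrite divr_gt0.
Qed.

Lemma Bc0 : 0 <= Bc.
Proof. by do 3! (apply: sumr_ge0 => ? _). Qed.

Lemma Kp_near (x : S -> A i -> R) e : 0 <= e -> (forall s b, `|x s b - pis i s b| <= e) ->
  e * Bc <= zeta / 2 -> forall s, \sum_s' `|Kp (upd pis x) s s'| <= q1.
Proof.
move=> e0 hx heB s.
apply: (le_trans (y := (1 - zeta) + e * Bc)); last first.
  rewrite /q1 le_max; apply/orP; right; lra.
under eq_bigr do rewrite Kp_diff.
apply: le_trans (ler_sum _ (fun s' _ => ler_normD _ _)) _.
rewrite big_split /=; apply: lerD; first exact: (Kp_pol' hpis s).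
apply: (le_trans (y := \sum_s' \sum_(a : jact A) e * `|rest pis i s a * P s a s'|)).
  apply: ler_sum => s' _; apply: le_trans (ler_norm_sum _ _ _) _.
  apply: ler_sum => a _; rewrite normrM; apply: ler_wpM2r => //; exact: hx.
under eq_bigr do rewrite -big_distrr /=; rewrite -big_distrr /=.
apply: ler_wpM2l => //; rewrite /Bc [X in _ <= X](bigD1 s) //= lerDl.
by do 3! (apply: sumr_ge0 => ? _).
Qed.

Definition xh (s0 : S) (b0 : A i) (h : R) : S -> A i -> R :=
  fun s' a' => pis i s' a' + (if (s' == s0) && (a' == b0) then h else 0).

Lemma xh_diff s0 b0 h s b : xh s0 b0 h s b - pis i s b = if (s == s0) && (b == b0) then h else 0.
Proof. by rewrite /xh addrAC subrr add0r. Qed.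

Lemma collapse s0 b0 h (D : S -> R) (G : S -> A i -> R) :
  \sum_s D s * \sum_b (xh s0 b0 h s b - pis i s b) * G s b = D s0 * (h * G s0 b0).
Proof.
rewrite (bigD1 s0) //= [X in _ + X]big1 ?addr0.
  congr (_ * _); rewrite (bigD1 b0) //= xh_diff !eqxx /= big1 ?addr0 // => b hb.
  by rewrite xh_diff eqxx /= (negbTE hb) mul0r.
move=> s hs; rewrite big1 ?mulr0 // => b _; by rewrite xh_diff (negbTE hs) mul0r.
Qed.

Lemma xh_near s0 b0 h : forall s b, `|xh s0 b0 h s b - pis i s b| <= `|h|.
Proof. by move=> s b; rewrite xh_diff; case: ifP => _ //; rewrite normr0. Qed.


Lemma grad_eq s0 (b0 : A i) : grad P rho r pis s0 b0 = dd K0 rho s0 * Q s0 b0.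
Proof.
pose D0 := dd K0 rho.
pose ind := @dlt R S s0.
pose wi := wv K0 ind.
pose alpha := \sum_(a : jact A | a i == b0) rest pis i s0 a * \sum_s' P s0 a s' * wi s'.
pose Qv := Q s0 b0.
pose f := fun h => value P rho (r i) (upd pis (xh s0 b0 h)).
pose Dh := fun h => dd (Kp (upd pis (xh s0 b0 h))) rho.
pose dl := Num.min (zeta / (2 * (Bc + 1))) (1 / (2 * (`|alpha| + 1))).
have Bc1 : 0 < Bc + 1 by have := Bc0; lra.
have al1 : 0 < `|alpha| + 1 by have := normr_ge0 alpha; lra.
have dl0 : 0 < dl.
  rewrite /dl lt_min; apply/andP; split; apply: divr_gt0 => //; try lra; exact: mulr_gt0.
have hcontr : forall h, `|h| <= dl -> forall s, \sum_s' `|Kp (upd pis (xh s0 b0 h)) s s'| <= q1.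
  move=> h hh; apply: (Kp_near (e := `|h|)) => //; first exact: xh_near.
  have h1 : `|h| <= zeta / (2 * (Bc + 1)) by apply: le_trans hh _; rewrite /dl ge_min lexx.
  have h2 : `|h| * (2 * (Bc + 1)) <= zeta by rewrite -ler_pdivlMr // mulr_gt0.
  have := Bc0; have := normr_ge0 h; nra.
have ef : forall h, `|h| <= dl -> f h - value P rho (r i) pis = Dh h s0 * (h * Qv).
  move=> h hh; rewrite /f (pdl_game q1P (hcontr h hh)); exact: collapse.
have D0e : \sum_s rho s * wi s = D0 s0.
  have := pdl ind (dd_fix q0P (Kp_pol hpis) rho) (wv_fix q0P (Kp_pol hpis) ind).
  move=> e; rewrite [in RHS]big1 in e; last first.
    by move=> s _; rewrite subrr add0r big1 ?mulr0 // => s' _; rewrite subrr mul0r.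
  move/eqP: e; rewrite subr_eq0 => /eqP <-.
  rewrite (bigD1 s0) //= /ind /dlt eqxx mulr1 big1 ?addr0 // => s hs; by rewrite (negbTE hs) mulr0.
have ed : forall h, `|h| <= dl -> Dh h s0 - D0 s0 = Dh h s0 * (h * alpha).
  move=> h hh.
  have := pdl ind (dd_fix q1P (hcontr h hh) rho) (wv_fix q0P (Kp_pol hpis) ind).
  rewrite -/wi D0e.
  have -> : \sum_s Dh h s * ind s = Dh h s0.
    rewrite (bigD1 s0) //= /ind /dlt eqxx mulr1 big1 ?addr0 // => s hs; by rewrite (negbTE hs) mulr0.
  move=> ->; under eq_bigr do rewrite subrr add0r inner_K.
  exact: (collapse s0 b0 h (Dh h) (fun s b => \sum_(a : jact A | a i == b) rest pis i s a * \sum_s' P s a s' * wi s')).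
have key : forall h, h != 0 -> `|h| < dl ->
    f h - f 0 = h * (D0 s0 * Qv / (1 - h * alpha)).
  move=> h hn hh.
  have hh' : `|h| <= dl by exact: ltW.
  have h00 : `|0 : R| <= dl by rewrite normr0 ltW.
  have f0 : f 0 - value P rho (r i) pis = 0 by rewrite ef // mul0r mulr0.
  have ha : `|h| <= 1 / (2 * (`|alpha| + 1)) by apply: le_trans hh' _; rewrite /dl ge_min lexx orbT.
  have ha2 : `|h| * (2 * (`|alpha| + 1)) <= 1 by rewrite -ler_pdivlMr // mulr_gt0.
  have hal : `|h * alpha| <= 1 / 2.
    rewrite normrM; have := normr_ge0 h; have := normr_ge0 alpha; nra.
  have hpos : 0 < 1 - h * alpha.
    have := ler_norm (h * alpha); lra.
  have eDh : Dh h s0 = D0 s0 / (1 - h * alpha).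
    have := ed h hh'; move=> e; apply: (@mulIf _ (1 - h * alpha)); first by rewrite gt_eqF.
    rewrite divfK ?gt_eqF //; lra.
  have := ef h hh'; rewrite eDh => e1.
  have -> : f h - f 0 = (f h - value P rho (r i) pis) - (f 0 - value P rho (r i) pis) by ring.
  rewrite e1 f0 subr0; ring.
have hg : (fun h => D0 s0 * Qv / (1 - h * alpha)) @ 0 --> D0 s0 * Qv / (1 - 0 * alpha).
  apply: cvgMl_tmp; apply: cvgV; first by rewrite mul0r subr0 oner_neq0.
  apply: cvgB; first exact: cvg_cst.
  apply: cvgMr_tmp; exact: cvg_id.
have := deriv_near dl0 key hg.
rewrite mul0r subr0 divr1 => <-.
by [].
Qed.


Hypothesis hrho : forall s, 0 <= rho s.
Variable M : R.
Hypothesis hM : forall pi pi' : @polarr R N S A, is_policy pi -> is_policy pi' ->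
  forall s, visit P rho pi s <= M * visit P rho pi' s.

Lemma upd_pol (x : S -> A i -> R) : is_policy_i x -> is_policy (upd pis x).
Proof.
move=> hx j; case: (eqVneq i j) => [<- | hij].
  have e1 : @upd R N S A pis i x i = x by exact: dfwith_in.
  by rewrite e1.
have e2 : @upd R N S A pis i x j = pis j by rewrite /upd; apply: dfwith_out.
by rewrite e2.
Qed.

Lemma Dpol_ge0 pi s : is_policy pi -> 0 <= dd (Kp pi) rho s.
Proof.
move=> hp; apply: limr_ge; first exact/cvgP/(useq_cvg q0P (Kp_pol hp)).
apply: nearW => n; apply: sumr_ge0 => t _.
elim: t s => [|t IH] s' //=; apply: sumr_ge0 => s _; apply: mulr_ge0 => //; exact: Kp_ge0.
Qed.

Definition E s := \sum_b pis i s b * Q s b.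

Definition x1 (s1 : S) (b1 : A i) : S -> A i -> R :=
  fun s b => if s == s1 then (b == b1)%:R else pis i s b.

Lemma x1_pol s1 b1 : is_policy_i (x1 s1 b1).
Proof.
move=> s; rewrite /x1; case: (eqVneq s s1) => [e|hs].
  subst s; split; first by move=> b; rewrite ler0n.
  rewrite (bigD1 b1) //= eqxx big1 ?addr0 // => b hb; by rewrite (negbTE hb).
exact: hpis.
Qed.

Lemma x1_sum s1 b1 s : \sum_b (x1 s1 b1 s b - pis i s b) * Q s b =
  if s == s1 then Q s1 b1 - E s1 else 0.
Proof.
rewrite /x1; case: ifP => [/eqP -> | _]; last by rewrite big1 // => b _; rewrite subrr mul0r.
under eq_bigr do rewrite mulrBl; rewrite sumrB; congr (_ - _).
rewrite (bigD1 b1) //= eqxx mul1r big1 ?addr0 // => b hb; by rewrite (negbTE hb) mul0r.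
Qed.

Lemma xsum_le (x : S -> A i -> R) s : is_policy_i x -> (forall b', Q s b' <= E s) ->
  \sum_b (x s b - pis i s b) * Q s b <= 0.
Proof.
move=> hx hG; under eq_bigr do rewrite mulrBl; rewrite sumrB subr_le0 -/(E s).
apply: (le_trans (y := \sum_b x s b * E s)).
  apply: ler_sum => b _; apply: ler_wpM2l; [exact: (hx s).1 | exact: hG].
by rewrite -big_distrl /= (hx s).2 mul1r.
Qed.

Lemma D0_eq s : visit P rho pis s = dd K0 rho s.
Proof. exact: visit_eq. Qed.

Lemma G_of_nash : (forall x : S -> A i -> R, is_policy_i x -> value P rho (r i) (upd pis x) <= value P rho (r i) pis) ->
  forall s1, 0 < dd K0 rho s1 -> forall b1, Q s1 b1 <= E s1.
Proof.
move=> hN s1 hd b1.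
have hp := upd_pol (x1_pol s1 b1).
have e : value P rho (r i) (upd pis (x1 s1 b1)) - value P rho (r i) pis =
    dd (Kp (upd pis (x1 s1 b1))) rho s1 * (Q s1 b1 - E s1).
  rewrite (pdl_game q0P (Kp_pol hp)); under eq_bigr do rewrite x1_sum.
  rewrite (bigD1 s1) //= eqxx big1 ?addr0 // => s hs; by rewrite (negbTE hs) mulr0.
have h1 := hN _ (x1_pol s1 b1).
have hpos : 0 < dd (Kp (upd pis (x1 s1 b1))) rho s1.
  have := hM hpis hp s1; rewrite !visit_eq -/K0 => hle.
  have hge := Dpol_ge0 s1 hp.
  rewrite lt_neqAle hge andbT; apply/eqP => h0.
  by move: hle; rewrite -h0 mulr0 => /(lt_le_trans hd); rewrite ltxx.
have : dd (Kp (upd pis (x1 s1 b1))) rho s1 * (Q s1 b1 - E s1) <= 0 by rewrite -e subr_le0.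
by rewrite pmulr_rle0 // subr_le0.
Qed.

Lemma grad_form (x : S -> A i -> R) :
  \sum_s \sum_b grad P rho r pis s b * (x s b - pis i s b) =
  \sum_s dd K0 rho s * \sum_b (x s b - pis i s b) * Q s b.
Proof.
apply: eq_bigr => s _; rewrite big_distrr /=; apply: eq_bigr => b _.
by rewrite grad_eq; ring.
Qed.

Lemma G_of_grad : (forall x : S -> A i -> R, is_policy_i x ->
    \sum_s \sum_b grad P rho r pis s b * (x s b - pis i s b) <= 0) ->
  forall s1, 0 < dd K0 rho s1 -> forall b1, Q s1 b1 <= E s1.
Proof.
move=> hg s1 hd b1.
have := hg _ (x1_pol s1 b1); rewrite grad_form.
under eq_bigr do rewrite x1_sum.
rewrite (bigD1 s1) //= eqxx big1 ?addr0; last by move=> s hs; rewrite (negbTE hs) mulr0.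
by rewrite pmulr_rle0 // subr_le0.
Qed.

Lemma nash_of_G : (forall s1, 0 < dd K0 rho s1 -> forall b1, Q s1 b1 <= E s1) ->
  forall x : S -> A i -> R, is_policy_i x -> value P rho (r i) (upd pis x) <= value P rho (r i) pis.
Proof.
move=> hG x hx; rewrite -subr_le0.
have hp := upd_pol hx.
rewrite (pdl_game q0P (Kp_pol hp)); apply: sumr_le0 => s _.
have hd0 := Dpol_ge0 s hpis.
have hdx := Dpol_ge0 s hp.
case: (ltrP 0 (dd K0 rho s)) => hd.
  by apply: mulr_ge0_le0 => //; apply: xsum_le hx (hG s hd).
have : dd (Kp (upd pis x)) rho s = 0.
  apply/eqP; rewrite eq_le hdx andbT.
  have := hM hp hpis s; rewrite !visit_eq -/K0.
  have -> : dd K0 rho s = 0 by apply/eqP; rewrite eq_le hd hd0.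
  by rewrite mulr0.
by move=> ->; rewrite mul0r.
Qed.

Lemma grad_of_G : (forall s1, 0 < dd K0 rho s1 -> forall b1, Q s1 b1 <= E s1) ->
  forall x : S -> A i -> R, is_policy_i x -> \sum_s \sum_b grad P rho r pis s b * (x s b - pis i s b) <= 0.
Proof.
move=> hG x hx; rewrite grad_form; apply: sumr_le0 => s _.
have hd0 := Dpol_ge0 s hpis.
case: (ltrP 0 (dd K0 rho s)) => hd.
  by apply: mulr_ge0_le0 => //; apply: xsum_le hx (hG s hd).
have -> : dd K0 rho s = 0 by apply/eqP; rewrite eq_le hd hd0.
by rewrite mul0r.
Qed.

Lemma gi_upd (x : S -> A i -> R) :
  grad_inner P rho r pis (upd pis x) = \sum_s \sum_b grad P rho r pis s b * (x s b - pis i s b).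
Proof.
have e1 : @upd R N S A pis i x i = x by exact: dfwith_in.
have e2 : forall j, j != i -> @upd R N S A pis i x j = pis j.
  by move=> j hj; rewrite /upd; apply: dfwith_out; rewrite eq_sym.
rewrite /grad_inner (bigD1 i) //= [X in _ + X]big1 ?addr0; first by rewrite e1.
move=> j hj; rewrite e2 //; apply: big1 => s _; apply: big1 => b _; by rewrite subrr mulr0.
Qed.

End Main.
End G.


End Helpers.
Import Helpers.
Unset Implicit Arguments.

Theorem lemma3 (R : realType) (N S : finType) (A : N -> finType)
  (P : S -> jact A -> S -> R) (r : N -> S -> jact A -> R) (rho : S -> R) (zeta : R) :
  0 < zeta ->
  (forall s a s', 0 <= P s a s') ->
  (forall s a, zeta <= 1 - \sum_(s' : S) P s a s') ->
  (forall i s a, -1 <= r i s a <= 1) ->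
  (forall s, 0 <= rho s) -> \sum_(s : S) rho s = 1 ->
  (exists M : R, forall pi pi' : @polarr R N S A, is_policy pi -> is_policy pi' ->
     forall s, visit P rho pi s <= M * visit P rho pi' s) ->
  forall pis : @polarr R N S A, is_policy pis ->
    (is_nash P rho r pis <->
     (forall pi : @polarr R N S A, is_policy pi -> grad_inner P rho r pis pi <= 0)).
Proof.
move=> hz hP hPz hr hrho hrho1 [M hM] pis hpis; split.
- move=> hN pi hpi; rewrite /grad_inner; apply: sumr_le0 => j _.
  have hG := G_of_nash (i := j) hz hP hPz hpis hrho hM (hN j).
  exact: (grad_of_G hz hP hPz hpis hrho hG (hpi j)).
- move=> hg j x hx.
  have hG := G_of_grad (i := j) hz hP hPz hpis
    (fun x hx => ltac:(rewrite -gi_upd; exact: hg _ (upd_pol hpis hx))).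
  exact: (nash_of_G hz hP hPz hpis hrho hM hG hx).
Qed.
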